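(* Let $G=(V_G,E_G)$ and $H=(V_H,E_H)$ be graphs on $n$ vertices with partitions $V_G=L_G\cup R_G$, $V_H=L_H\cup R_H$ into sets of size $n/2$, let $\alpha\ge1$ be a constant, let $d=\max\{2|E_H|/n,\ C\log^3 n\}$ for a sufficiently large constant $C$, and let $V_G^{<\alpha d}=\{u\in V_G:\deg(u,G)<\alpha d\}$. Suppose $|V_G^{<\alpha d}|\ge n/\alpha$. Let $\pi$ be uniformly random in $\Pi_{LR}$ and $F=G\boxplus_\pi H$. Consider the algorithm that sorts the vertices of $F$ by their degree in $F$, lets $L'$ be the $\lceil n/(3\alpha)\rceil$ vertices of smallest degree and $R'=V_F\setminus L'$, and outputs $(L',R')$. Then $(L',R')$ is a $\Theta(1)$-balanced cut, and with high probability (over $\pi$) the number of edges of $F$ between $L'$ and $R'$ is $O(dn)$.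
   Context: $\Pi_{LR}$ is the set of bijections $\pi:V_H\to V_G$ with $\pi(L_H)=L_G$, $\pi(R_H)=R_G$. $F=G\boxplus_\pi H$ is the graph on $V_G$ with edge set $E_G\cup\{(\pi(x),\pi(y)):(x,y)\in E_H\}$. A cut $(S,T)$ is $b$-balanced if $|S|,|T|\ge bn$; $\Theta(1)$-balanced means $b$-balanced for some constant $b>0$ (depending only on $\alpha$). *)

(* Defs.v *)
From HB Require Import structures.
From mathcomp Require Import all_boot all_order all_algebra.
From mathcomp Require Import fingroup perm.
From mathcomp Require Import reals exp.
Set Implicit Arguments. Unset Strict Implicit. Unset Printing Implicit Defensive.
Import Order.TTheory GRing.Theory Num.Theory.
Local Open Scope ring_scope.

Definition simple_graph (n : nat) (E : rel 'I_n) : Prop :=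
  symmetric E /\ irreflexive E.

Definition deg (n : nat) (E : rel 'I_n) (u : 'I_n) : nat := #|[set v | E u v]|.

Definition nedges (n : nat) (E : rel 'I_n) : nat :=
  (#|[set p : 'I_n * 'I_n | E p.1 p.2]| %/ 2)%N.

Definition PiLR (n : nat) (LG LH : {set 'I_n}) : {set {perm 'I_n}} :=
  [set p : {perm 'I_n} | (p @: LH == LG) && (p @: (~: LH) == ~: LG)].

Definition boxplus (n : nat) (G H : rel 'I_n) (p : {perm 'I_n}) : rel 'I_n :=
  fun x y => G x y || H ((p^-1)%g x) ((p^-1)%g y).

Definition cut_edges (n : nat) (E : rel 'I_n) (S : {set 'I_n}) : nat :=
  #|[set p : 'I_n * 'I_n | (p.1 \in S) && (p.2 \notin S) && E p.1 p.2]|.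

(* L' is a possible output of the algorithm: a set of k vertices of smallest
   degree in E (ties broken arbitrarily). *)
Definition smallest_deg_set (n : nat) (E : rel 'I_n) (k : nat) (L : {set 'I_n}) : bool :=
  (#|L| == k) && [forall x, forall y, ((x \in L) && (y \notin L)) ==> (deg E x <= deg E y)%N].

Definition dparam (R : realType) (n : nat) (H : rel 'I_n) (C : R) : R :=
  Num.max (2 * (nedges H)%:R / n%:R) (C * (ln (n%:R : R)) ^+ 3).

Definition nlow (R : realType) (n : nat) (G : rel 'I_n) (t : R) : nat :=
  #|[set u | (deg G u)%:R < t]|.

Definition kparam (R : realType) (n : nat) (alpha : R) : nat :=
  `|Num.ceil (n%:R / (3 * alpha))|%N.

(* Main.v *)
Require Import Defs.
From HB Require Import structures.
From mathcomp Require Import all_boot all_order all_algebra.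
From mathcomp Require Import fingroup perm.
From mathcomp Require Import reals exp.
From mathcomp Require Import ring lra.
Import Order.TTheory GRing.Theory Num.Theory.
Local Open Scope ring_scope.
Section PiNE.
Variables (n : nat) (LG LH : {set 'I_n}).
Hypothesis hc : #|LG| = #|LH|.
Let s := enum LH ++ enum (~: LH).
Let t := enum LG ++ enum (~: LG).
Definition fpi (x : 'I_n) : 'I_n := nth x t (index x s).
Lemma mem_s x : x \in s.
Proof. by rewrite mem_cat !mem_enum in_setC; case: (x \in LH). Qed.
Lemma size_st : size s = size t.
Proof. by rewrite /s /t !size_cat -!cardE !cardsC. Qed.
Lemma szG : size (enum LG) = size (enum LH).
Proof. by move: hc; rewrite !cardE. Qed.
Lemma szGC : size (enum (~: LG)) = size (enum (~: LH)).
Proof. have e1 := cardsC LG; have e2 := cardsC LH; rewrite hc -e2 in e1.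
have := addnI e1; by rewrite !cardE. Qed.
Lemma idx_lt x : (index x s < size t)%N.
Proof. by rewrite /t size_cat szG szGC -size_cat index_mem mem_s. Qed.
Lemma fpi_nth x y : fpi x = nth y t (index x s).
Proof. apply: set_nth_default; exact: idx_lt. Qed.
Lemma fpi_inj : injective fpi.
Proof.
move=> x y; rewrite (fpi_nth x x) (fpi_nth y x) => /eqP.
rewrite nth_uniq ?(cat_uniq, enum_uniq) ?idx_lt //=.
- move=> /eqP e. by rewrite -(nth_index x (mem_s x)) e nth_index // mem_s.
- rewrite andbT; apply/hasPn => z; rewrite !mem_enum in_setC => /negbTE ->. by [].
Qed.
Lemma PiLR_nonempty : exists p, p \in PiLR LG LH.
Proof.
exists (perm fpi_inj); rewrite inE; apply/andP; split.
- rewrite eqEcard card_imset ?hc ?leqnn ?andbT; last exact: perm_inj.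
  apply/subsetP => _ /imsetP [x xL ->]; rewrite permE (fpi_nth x x) /t /s index_cat mem_enum xL.
  rewrite nth_cat szG index_mem mem_enum xL.
  by rewrite -(mem_enum LG) mem_nth // szG index_mem mem_enum.
- rewrite eqEcard card_imset; last exact: perm_inj.
  rewrite [X in (_ <= X)%N]cardE [X in (X <= _)%N]cardE szGC leqnn andbT.
  apply/subsetP => _ /imsetP [x xL ->]; rewrite permE (fpi_nth x x) /t /s index_cat mem_enum.
  rewrite in_setC in xL; rewrite (negbTE xL) nth_cat szG ltnNge leq_addr /= addKn.
  by rewrite -(mem_enum (~: LG)) mem_nth // szGC index_mem mem_enum in_setC.
Qed.
End PiNE.
Lemma card_pairs n (P : 'I_n -> 'I_n -> bool) :
  #|[set q : 'I_n * 'I_n | P q.1 q.2]| = (\sum_x #|[set y | P x y]|)%N.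
Proof.
rewrite -sum1_card big_mkcond /=.
rewrite (eq_bigr (fun q => nat_of_bool (P q.1 q.2))); last by case=> x y _; rewrite inE; case: P.
rewrite -(pair_bigA _ (fun x y => nat_of_bool (P x y))) /=.
apply: eq_bigr => x _; rewrite -sum1_card [RHS]big_mkcond; apply: eq_bigr => y _.
by rewrite !inE; case: P.
Qed.

Lemma deg_boxplus n (G H : rel 'I_n) (p : {perm 'I_n}) u :
  (deg (boxplus G H p) u <= deg G u + deg H ((p^-1)%g u))%N.
Proof.
rewrite /deg -[X in (_ <= _ + X)%N](card_imset _ (@perm_inj _ p)).
apply: (leq_trans _ (leq_card_setU _ _)).
apply: subset_leq_card; apply/subsetP => v; rewrite !inE /boxplus.
case/orP => [-> //| h].
rewrite orbC; apply/orP; left; apply/imsetP; exists ((p^-1)%g v); first by rewrite inE.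
by rewrite permKV.
Qed.

Lemma sum_deg_perm n (H : rel 'I_n) (p : {perm 'I_n}) :
  (\sum_u deg H ((p^-1)%g u) = \sum_w deg H w)%N.
Proof.
by rewrite (reindex_inj (@perm_inj _ p)) /=; apply: eq_bigr => u _; rewrite permK.
Qed.

Lemma pairs_le n (H : rel 'I_n) :
  (#|[set q : 'I_n * 'I_n | H q.1 q.2]| <= 2 * nedges H + 1)%N.
Proof.
rewrite /nedges {1}(divn_eq #|[set q : 'I_n * 'I_n | H q.1 q.2]| 2) mulnC leq_add2l.
by rewrite -ltnS ltn_mod.
Qed.

Lemma cut_bound (R : realType) n (G H : rel 'I_n) (p : {perm 'I_n}) (alpha d : R) (k : nat) (L' : {set 'I_n}) :
  0 < alpha -> 1 <= d -> 2 * (nedges H)%:R <= d * n%:R ->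
  n%:R <= alpha * (nlow G (alpha*d))%:R ->
  3*alpha*(k%:R) <= n%:R + 3*alpha ->
  3*alpha + 1 <= n%:R ->
  smallest_deg_set (boxplus G H p) k L' ->
  (cut_edges (boxplus G H p) L')%:R <= k%:R * (4*alpha*d).
Proof.
move=> a0 d1 hE hlow hk hn /andP[/eqP cL hmin].
have d0 : 0 < d by apply: lt_le_trans d1.
set F := boxplus G H p.
set S := [set u | (deg F u)%:R < 4*alpha*d].
set A := [set u | (deg G u)%:R < alpha*d].
set B := [set u | 3*alpha*d <= (deg H ((p^-1)%g u))%:R].
have sub : A :\: B \subset S.
  apply/subsetP => u; rewrite !inE -ltNge => /andP[hB hA].
  have hd := deg_boxplus _ G H p u; rewrite -(ler_nat R) natrD in hd.
  apply: (le_lt_trans hd); have -> : 4 * alpha * d = alpha * d + 3 * alpha * d by ring.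
  exact: ltrD.
have hB : 3 * alpha * d * #|B|%:R <= d * n%:R + 1.
  have e1 : (\sum_u deg H ((p^-1)%g u))%:R <= d * n%:R + 1 :> R.
    rewrite sum_deg_perm -card_pairs.
    apply: (@le_trans _ _ (2 * nedges H + 1)%N%:R); first by rewrite ler_nat; exact: pairs_le.
    by rewrite natrD natrM lerD2r.
  apply: le_trans e1; rewrite natr_sum -sum1_card natr_sum mulr_sumr.
  rewrite [X in _ <= X](bigID (fun u => u \in B)) /= -[X in X <= _]addr0.
  apply: lerD; last by apply: sumr_ge0 => u _; exact: ler0n.
  by apply: ler_sum => u; rewrite inE mulr1.
have cAB : (#|A| <= #|A :\: B| + #|B|)%N.
  apply: leq_trans (leq_card_setU _ _); apply: subset_leq_card.
  apply/subsetP => u uA; rewrite in_setU in_setD uA andbT; by case: (u \in B).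
have cDS : (#|A :\: B| <= #|S|)%N by apply: subset_leq_card.
have hS : (k <= #|S|)%N.
  apply: leq_trans cDS; rewrite -(ler_nat R).
  rewrite -(ler_nat R) natrD in cAB.
  have hl : n%:R <= alpha * #|A|%:R := hlow.
  set X := #|A :\: B|%:R in cAB *; set Y := #|B|%:R in hB cAB; set Z := #|A|%:R in hl cAB.
  have f1 : d * (3 * alpha * k%:R) <= d * (n%:R + 3 * alpha) by rewrite ler_pM2l.
  have f2 : 3 * d * n%:R <= 3 * d * (alpha * Z) by rewrite ler_pM2l // mulr_gt0.
  have f3 : 1 <= d * (n%:R - 3 * alpha).
    have : 0 <= (d - 1) * (n%:R - 3 * alpha - 1) by apply: mulr_ge0; lra.
    lra.
  have f4 : 3 * alpha * d * Z <= 3 * alpha * d * (X + Y) by rewrite ler_pM2l // !mulr_gt0.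
  suff h : (3*alpha*d) * k%:R <= (3*alpha*d) * X by rewrite ler_pM2l ?mulr_gt0 in h.
  nra.
have LS : L' \subset S.
  apply/subsetP => x xL; apply/negPn/negP => xS.
  have SL : S \subset L' :\ x.
    apply/subsetP => y yS; rewrite in_setD1; apply/andP; split.
      by apply/negP => /eqP e; move: yS; rewrite e; apply/negP.
    apply/negPn/negP => yL.
    have := forallP hmin x => /forallP /(_ y); rewrite xL yL /= => hxy.
    move: xS yS; rewrite !inE -!leNgt => xS.
    move=> yS; have : (deg F x)%:R <= (deg F y)%:R :> R by rewrite ler_nat.
    by move=> h; have := le_trans xS h; rewrite leNgt yS.
  have c1 := subset_leq_card SL; rewrite (cardsD1 x L') xL in cL.
  move: cL hS c1; rewrite add1n => <- h1 h2; have := leq_trans h1 h2; by rewrite ltnn.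
have c1 : (cut_edges F L' <= #|[set q : 'I_n * 'I_n | (q.1 \in L') && F q.1 q.2]|)%N.
  apply: subset_leq_card; apply/subsetP => q; rewrite !inE.
  by case/andP => /andP [-> _] ->.
rewrite (card_pairs _ (fun x y => (x \in L') && F x y)) in c1.
rewrite -(ler_nat R) in c1; apply: le_trans c1 _.
rewrite natr_sum -cL -sumr_const mulr_suml [X in _ <= X]big_mkcond /=; apply: ler_sum => x _; rewrite mul1r.
case: ifP => xL.
  have : x \in S by apply: (subsetP LS).
  rewrite inE => h; apply: ltW; apply: le_lt_trans h; rewrite ler_nat.
  by apply: subset_leq_card; apply/subsetP => y; rewrite !inE.
rewrite (_ : [set y | _] = set0) ?cards0 //.
Qed.

Theorem lemma12 (R : realType) (alpha : R) (halpha : 1 <= alpha) :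
  exists b : R, 0 < b /\
  exists C0 : R, forall C : R, C0 <= C ->
  exists K : R, 0 < K /\
  forall delta : R, 0 < delta ->
  exists N : nat, forall (n : nat), (N <= n)%N ->
  forall (G H : rel 'I_n) (LG LH : {set 'I_n}),
    simple_graph G -> simple_graph H ->
    (#|LG| * 2)%N = n -> (#|LH| * 2)%N = n ->
    let d := dparam H C in
    n%:R / alpha <= (nlow G (alpha * d))%:R ->
    (* (L', R') is Theta(1)-balanced, for every pi and every tie-breaking *)
    (forall p : {perm 'I_n}, p \in PiLR LG LH ->
       forall L' : {set 'I_n},
         smallest_deg_set (boxplus G H p) (kparam n alpha) L' ->
         b * n%:R <= #|L'|%:R /\ b * n%:R <= #|~: L'|%:R) /\
    (* w.h.p. over uniform pi in Pi_LR, the cut has O(d n) edges *)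
    1 - delta <=
      #|[set p in PiLR LG LH |
          [forall L' : {set 'I_n},
             smallest_deg_set (boxplus G H p) (kparam n alpha) L' ==>
             ((cut_edges (boxplus G H p) L')%:R <= K * d * n%:R)]]|%:R
      / #|PiLR LG LH|%:R.
Proof.
have a0 : 0 < alpha by apply: lt_le_trans halpha.
have l2 : 0 < ln (2%:R : R) by apply: ln_gt0; rewrite ltr1n.
exists (6*alpha)^-1; split; first by rewrite invr_gt0 mulr_gt0.
exists ((ln (2%:R : R)) ^+ 3)^-1 => C hC.
exists (4*alpha+2); split; first by lra.
move=> delta hdelta.
exists (maxn 2 `|Num.ceil (6*alpha)|%N) => n hn G H LG LH sG sH hLG hLH d hlow.
have n2 : (2 <= n)%N by apply: leq_trans hn; rewrite leq_maxl.
have n2r : 2 <= n%:R :> R by rewrite ler_nat.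
have n6 : 6*alpha <= n%:R.
  have h := leq_trans (leq_maxr 2 _) hn; rewrite -(ler_nat R) natr_absz ger0_norm in h.
    exact: le_trans (ceil_ge _) h.
  by rewrite ceil_ge0; lra.
have l2n : ln (2%:R : R) <= ln n%:R by rewrite ler_ln // posrE; lra.
have iC : 0 < ((ln (2%:R : R)) ^+ 3)^-1 by rewrite invr_gt0 exprn_gt0.
have d1 : 1 <= d.
  rewrite /d /dparam le_max; apply/orP; right.
  have h3 : ln (2%:R : R) ^+ 3 <= ln n%:R ^+ 3.
    by rewrite lerXn2r // nnegrE ltW //; apply: lt_le_trans l2n.
  apply: (@le_trans _ _ (((ln (2%:R : R)) ^+ 3)^-1 * (ln (2%:R : R)) ^+ 3)).
    by rewrite mulVf // lt0r_neq0 // exprn_gt0.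
  apply: ler_pM => //; [exact: ltW | by rewrite ltW // exprn_gt0].
have hE : 2 * (nedges H)%:R <= d * n%:R.
  rewrite -ler_pdivrMr; last by lra.
  by rewrite /d /dparam le_max lexx.
set k := kparam n alpha.
have x0 : 0 <= n%:R / (3 * alpha) by rewrite divr_ge0 // ltW // mulr_gt0.
have kb1 : n%:R / (3 * alpha) <= k%:R.
  rewrite /k /kparam natr_absz ger0_norm ?ceil_ge; last by rewrite ceil_ge0; lra.
  by [].
have kb2 : k%:R < n%:R / (3 * alpha) + 1.
  rewrite /k /kparam natr_absz ger0_norm; last by rewrite ceil_ge0; lra.
  by have := ceilB1_lt (n%:R / (3 * alpha)); rewrite intrD; lra.
have e3 : 3 * alpha * (n%:R / (3 * alpha)) = n%:R.
  by rewrite mulrC divfK // lt0r_neq0 // mulr_gt0.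
have hk : 3 * alpha * k%:R <= n%:R + 3 * alpha.
  have : 3 * alpha * k%:R < 3 * alpha * (n%:R / (3 * alpha) + 1).
    by rewrite ltr_pM2l // mulr_gt0.
  rewrite mulrDr e3 mulr1; exact: ltW.
have hn3 : 3 * alpha + 1 <= n%:R by lra.
have hlow' : n%:R <= alpha * (nlow G (alpha * d))%:R.
  by rewrite mulrC -ler_pdivrMr.
have key := fun p L' h => cut_bound R n G H p alpha d k L' a0 d1 hE hlow' hk hn3 h.
have e6 : (6*alpha)^-1 * n%:R = n%:R / (3*alpha) / 2.
  by field; exact: lt0r_neq0.
set y := n%:R / (3 * alpha) in x0 kb1 kb2 e3 e6.
have y3 : 3 * y <= n%:R.
  rewrite -[X in _ <= X]e3; have : 0 <= (alpha - 1) * y by apply: mulr_ge0 => //; lra.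
  nra.
split.
  move=> p _ L' /andP[/eqP cL _]; rewrite e6.
  have := cardsC L'; rewrite card_ord cL => e.
  have e' : k%:R + #|~: L'|%:R = n%:R :> R by rewrite -natrD e.
  split; lra.
have hc : #|LG| = #|LH|.
  by apply/eqP; rewrite -(eqn_pmul2r (_ : 0 < 2)%N) // hLG hLH.
have [p0 hp0] := PiLR_nonempty _ _ _ hc.
rewrite (_ : [set p in PiLR LG LH | _] = PiLR LG LH).
  rewrite divff; first by lra.
  by rewrite pnatr_eq0 -lt0n card_gt0; apply/set0Pn; exists p0.
apply/setP => p; rewrite inE; apply: andb_idr => _; apply/forallP => L'; apply/implyP => h.
apply: le_trans (key p L' h) _.
have f1 : d * (3 * alpha * k%:R) <= d * (n%:R + 3 * alpha) by rewrite ler_pM2l //; lra.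
have f2 : 0 <= d * alpha * (n%:R - 1) by rewrite !mulr_ge0 //; lra.
have f3 : 0 <= d * n%:R by rewrite mulr_ge0 //; lra.
nra.
Qed.
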